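(* Let $\mathbb{K}$ be a positive commutative monoid and let $R_1,\dots,R_m$ be a collection of $\mathbb{K}$-relations. The following are equivalent: (1) the collection is globally consistent; (2) the collection is globally consistent up to every cover of $\mathbb{K}$; (3) the collection is globally consistent up to some cover of $\mathbb{K}$.
   Context: Positive: $p+q=0\Rightarrow p=q=0$. For a finite attribute set $X$ (attributes have domains), a $\mathbb{K}$-relation over $X$ is a map $R$ from $X$-tuples to $K$ with finite support $R'$; $t[Y]$ is restriction; marginals $R[Y](t)=\sum_{r\in R',r[Y]=t}R(r)$. With $R_i$ over $X_i$, the collection is $k$-wise consistent if for every $q\le k$ and $i_1,\dots,i_q\in[m]$ some $\mathbb{K}$-relation $W$ over $X_{i_1}\cup\dots\cup X_{i_q}$ has $W[X_{i_j}]=R_{i_j}$ for all $j$; globally consistent means $m$-wise. A cover of $\mathbb{K}$ is a pair $(\mathbb{K}^*,h)$ with $\mathbb{K}^*$ a positive commutative monoid and $h:\mathbb{K}^*\to\mathbb{K}$ a surjective monoid homomorphism. An $h$-lift of a $\mathbb{K}$-relation $R$ over $Y$ is a $\mathbb{K}^*$-relation $R^*$ over $Y$ with $h(R^*(t))=R(t)$ for all $Y$-tuples $t$. The collection is $k$-wise (in particular globally) consistent up to the cover if there are $h$-lifts $R_1^*,\dots,R_m^*$ of $R_1,\dots,R_m$ forming a $k$-wise (globally) consistent collection of $\mathbb{K}^*$-relations. *)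

(* Defs.v *)
From HB Require Import structures.
From mathcomp Require Import all_boot all_order all_algebra.
From mathcomp Require Import finmap.
Set Implicit Arguments. Unset Strict Implicit. Unset Printing Implicit Defensive.
Import Order.TTheory GRing.Theory Num.Theory.
Local Open Scope fset_scope.
Local Open Scope fmap_scope.
Local Open Scope ring_scope.

(* A commutative monoid is an nmodType (written additively, identity 0).
   Positivity: p + q = 0 implies p = q = 0. *)
Definition positive_monoid (K : nmodType) : Prop :=
  forall p q : K, p + q = 0 -> p = 0 /\ q = 0.

Section KRel.
(* Attributes range over [Att]; each attribute [a] has the domain
   [[pred v | dom a v]] inside a common value type [Val]. *)
Variables (Att Val : choiceType) (dom : Att -> Val -> bool).

Definition is_tuple (X : {fset Att}) (t : {fmap Att -> Val}) : bool :=
  (domf t == X) && [forall a : domf t, dom (val a) (t a)].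

(* A K-relation is represented by a finite map from tuples to K; its value
   at a tuple t is the stored value, or 0 if t is not a key.
   Hence every such map has finite support. *)
Definition krel (K : nmodType) := {fmap {fmap Att -> Val} -> K}.

Definition kval (K : nmodType) (R : krel K) (t : {fmap Att -> Val}) : K :=
  odflt 0 R.[? t].

Definition krel_over (K : nmodType) (X : {fset Att}) (R : krel K) : bool :=
  [forall t : domf R, is_tuple X (val t)].

(* Marginal R[Y](t) = sum_{r in support of R, r[Y] = t} R(r)
   (keys with value 0 contribute 0, so summing over all keys is the same). *)
Definition marginal (K : nmodType) (R : krel K) (Y : {fset Att})
    (t : {fmap Att -> Val}) : K :=
  \sum_(r : domf R | (val r).[& Y] == t) R r.

Definition kwise_consistent (K : nmodType) (m k : nat)
    (X : 'I_m -> {fset Att}) (R : 'I_m -> krel K) : Prop :=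
  forall (q : nat) (idx : 'I_q -> 'I_m), (q <= k)%N ->
    exists W : krel K,
      krel_over (\big[@fsetU Att/fset0]_(j < q) X (idx j)) W /\
      forall j : 'I_q, forall t, marginal W (X (idx j)) t = kval (R (idx j)) t.

Definition globally_consistent (K : nmodType) (m : nat)
    (X : 'I_m -> {fset Att}) (R : 'I_m -> krel K) : Prop :=
  kwise_consistent m X R.

Definition is_cover (K Ks : nmodType) (h : Ks -> K) : Prop :=
  positive_monoid Ks /\ h 0 = 0 /\ (forall a b, h (a + b) = h a + h b) /\
  (forall y : K, exists x : Ks, h x = y).

Definition h_lift (K Ks : nmodType) (h : Ks -> K) (Y : {fset Att})
    (Rs : krel Ks) (R : krel K) : Prop :=
  krel_over Y Rs /\ forall t, h (kval Rs t) = kval R t.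

Definition globally_consistent_up_to (K Ks : nmodType) (h : Ks -> K) (m : nat)
    (X : 'I_m -> {fset Att}) (R : 'I_m -> krel K) : Prop :=
  exists Rs : 'I_m -> krel Ks,
    (forall i, h_lift h (X i) (Rs i) (R i)) /\ globally_consistent X Rs.

End KRel.

(* Main.v *)
Require Import Defs.
From HB Require Import structures.
From mathcomp Require Import all_boot all_order all_algebra.
From mathcomp Require Import finmap.
Set Implicit Arguments. Unset Strict Implicit. Unset Printing Implicit Defensive.
Import Order.TTheory GRing.Theory Num.Theory.
Local Open Scope fset_scope.
Local Open Scope fmap_scope.
Local Open Scope ring_scope.

Section Aux.
Variables (Att Val : choiceType) (dom : Att -> Val -> bool).

Lemma is_tupleP (X : {fset Att}) (t : {fmap Att -> Val}) :
  is_tuple dom X t <-> (domf t = X /\ forall a v, t.[? a] = Some v -> dom a v).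
Proof.
rewrite /is_tuple; split.
  case/andP => /eqP dt /forallP H; split => // a v.
  case: fndP => // kf [<-]; exact: (H [` kf]).
case=> dt H; apply/andP; split; first by apply/eqP.
apply/forallP => a.
by apply: H; rewrite Some_fnd.
Qed.

Lemma is_tuple_restr (U Y : {fset Att}) t :
  Y `<=` U -> is_tuple dom U t -> is_tuple dom Y t.[& Y].
Proof.
move=> sYU /is_tupleP [dt H]; apply/is_tupleP; split.
  by rewrite domf_restrict dt; apply/fsetIidPl.
by move=> a v; rewrite fnd_restrict; case: (a \in Y) => //; apply: H.
Qed.

Definition hmap (K Ks : nmodType) (f : Ks -> K) (W : krel Att Val Ks) : krel Att Val K :=
  [fmap r : domf W => f (W r)].

Lemma hmap_over (K Ks : nmodType) (f : Ks -> K) U W :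
  krel_over dom U W -> krel_over dom U (hmap f W).
Proof. by []. Qed.

Lemma marginal_hmap (K Ks : nmodType) (f : Ks -> K) W Y t :
  marginal (hmap f W) Y t = \sum_(r : domf W | (val r).[& Y] == t) f (W r).
Proof. by apply: eq_bigr => r _; rewrite ffunE. Qed.

Lemma kval_hmap (K Ks : nmodType) (f : Ks -> K) W t :
  f 0 = 0 -> kval (hmap f W) t = f (kval W t).
Proof.
move=> f0; rewrite /kval; case: (fndP W t) => [kf|kNf].
  have kf' : t \in domf (hmap f W) by [].
  by rewrite (in_fnd kf') /= ffunE /=; congr (f (W _)); apply: val_inj.
by rewrite (@not_fnd _ _ (hmap f W)) ?f0.
Qed.

Definition marg (K : nmodType) (W : krel Att Val K) (Y : {fset Att}) : krel Att Val K :=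
  [fmap s : [fset r.[& Y] | r in domf W] => marginal W Y (val s)].

Lemma kval_marg (K : nmodType) (W : krel Att Val K) Y t :
  kval (marg W Y) t = marginal W Y t.
Proof.
rewrite /kval; case: fndP => [kf|kNf] /=; first by rewrite ffunE.
rewrite /marginal big1 // => r /eqP Hr; case/negP: kNf.
by rewrite -Hr; apply/imfsetP; exists (val r) => //=; apply: valP.
Qed.

Lemma marg_over (K : nmodType) (W : krel Att Val K) U Y :
  Y `<=` U -> krel_over dom U W -> krel_over dom Y (marg W Y).
Proof.
move=> sYU /forallP H; apply/forallP => s.
have := valP s; case/imfsetP => r rW ->.
by apply: (is_tuple_restr sYU); apply: (H [` rW]).
Qed.

Lemma marginal_marg (K : nmodType) (W : krel Att Val K) Y Z t :
  Y `<=` Z -> marginal (marg W Z) Y t = marginal W Y t.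
Proof.
move=> sYZ.
have memp (r : domf W) : (val r).[& Z] \in domf (marg W Z).
  by apply/imfsetP; exists (val r) => //; apply: valP.
pose p (r : domf W) : domf (marg W Z) := [` memp r].
rewrite /marginal (partition_big p (fun s : domf (marg W Z) => (val s).[& Y] == t)); last first.
  by move=> r /eqP <- /=; rewrite restrictf_comp (fsetIidPr sYZ).
apply: eq_bigr => s /eqP Hs; rewrite ffunE /=.
apply: eq_bigl => r; rewrite -val_eqE.
apply/idP/andP; last by case => _ H; exact: H.
move=> H; split; last exact: H.
move/eqP: H => H.
have : (val r).[& Z].[& Y] = (val s).[& Y] by rewrite H.
rewrite restrictf_comp (fsetIidPr sYZ) Hs => E.
by apply/eqP; exact: E.
Qed.

Lemma sub_bigU q (F : 'I_q -> {fset Att}) j : F j `<=` \big[@fsetU Att/fset0]_(j < q) F j.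
Proof. by rewrite (bigD1 j) //= fsubsetUl. Qed.

Lemma bigU_sub q (F : 'I_q -> {fset Att}) U :
  (forall j, F j `<=` U) -> \big[@fsetU Att/fset0]_(j < q) F j `<=` U.
Proof.
move=> H; apply: (big_ind (fun S => S `<=` U)) => //.
by move=> A B HA HB; rewrite fsubUset HA HB.
Qed.

End Aux.

From Stdlib Require Import ClassicalEpsilon.

Theorem proposition42 (Att Val : choiceType) (dom : Att -> Val -> bool)
    (K : nmodType) (posK : positive_monoid K) (m : nat)
    (X : 'I_m -> {fset Att}) (R : 'I_m -> krel Att Val K)
    (HR : forall i, krel_over dom (X i) (R i)) :
  (globally_consistent dom X R <->
     (forall (Ks : nmodType) (h : Ks -> K), is_cover h ->
        globally_consistent_up_to dom h X R)) /\
  (globally_consistent dom X R <->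
     (exists (Ks : nmodType) (h : Ks -> K), is_cover h /\
        globally_consistent_up_to dom h X R)).
Proof.
have one_two : globally_consistent dom X R ->
   (forall (Ks : nmodType) (h : Ks -> K), is_cover h ->
        globally_consistent_up_to dom h X R).
  move=> GC Ks h [_ [h0 [hD hS]]].
  pose pre (y : K) : Ks := proj1_sig (constructive_indefinite_description _ (hS y)).
  have Hpre y : h (pre y) = y by rewrite /pre; case: constructive_indefinite_description.
  have [W [WU HW]] := GC m (fun i => i) (leqnn m).
  set U := \big[@fsetU Att/fset0]_(j < m) X j in WU.
  pose Ws := hmap pre W.
  have WsU : krel_over dom U Ws by apply: hmap_over.
  have XU i : X i `<=` U by apply: (sub_bigU (fun j => X j)).
  exists (fun i => marg Ws (X i)); split.
    move=> i; split; first exact: (marg_over (XU i) WsU).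
    move=> t; rewrite kval_marg marginal_hmap -HW.
    rewrite (big_morph h hD h0); apply: eq_bigr => r _; exact: Hpre.
  move=> q idx _.
  set Ui := \big[@fsetU Att/fset0]_(j < q) X (idx j).
  have sUi : Ui `<=` U by apply: bigU_sub => j; exact: XU.
  exists (marg Ws Ui); split; first exact: (marg_over sUi WsU).
  move=> j t; rewrite kval_marg marginal_marg //.
  exact: (sub_bigU (fun j => X (idx j))).
have three_one : (exists (Ks : nmodType) (h : Ks -> K), is_cover h /\
        globally_consistent_up_to dom h X R) -> globally_consistent dom X R.
  move=> [Ks [h [[_ [h0 [hD hS]]] [Rs [HL GC]]]]] q idx hq.
  have [Ws [WU HW]] := GC q idx hq.
  exists (hmap h Ws); split; first exact: hmap_over.
  move=> j t; rewrite marginal_hmap -(big_morph h hD h0).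
  have := HW j t; rewrite /marginal => ->.
  exact: (HL (idx j)).2.
have two_three : (forall (Ks : nmodType) (h : Ks -> K), is_cover h ->
        globally_consistent_up_to dom h X R) -> (exists (Ks : nmodType) (h : Ks -> K), is_cover h /\
        globally_consistent_up_to dom h X R).
  move=> H; exists K, id.
  have c : is_cover (@id K) by split => //; split => //; split => // y; exists y.
  by split => //; apply: H.
split; split.
- exact: one_two.
- by move=> H; apply: three_one; apply: two_three.
- by move=> H; apply: two_three; apply: one_two.
- exact: three_one.
Qed.
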